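(* Let $L$ be the digraph with vertex set $\mathbb{Z}\times\{-1,0,1\}$ in which $((i,x),(j,y))$ is an edge if and only if $j=i+1$ and either $i$ is even, or $i$ is odd and $x+y\neq 0$. Let $\varphi^1,\varphi^2:V(L)\to\mathbb{Z}$ be given by $\varphi^1((i,x))=i$ and $\varphi^2((i,x))=i+1$. Then the layerwise direct product $D=L\,{}_{\varphi^1}\!\!\times_{\varphi^2}L$ is highly arc transitive.
   Context: The integer-line digraph is $Z=(\mathbb{Z},\{(i,i+1)\mid i\in\mathbb{Z}\})$; $\varphi^1,\varphi^2$ are epimorphisms $L\to Z$. For digraphs $G^1=(V^1,E^1)$, $G^2=(V^2,E^2)$ with epimorphisms $\varphi^1:G^1\to Z$, $\varphi^2:G^2\to Z$, the layerwise direct product $G^1\,{}_{\varphi^1}\!\!\times_{\varphi^2}G^2$ is the digraph with vertex set $\{(x,y)\mid x\in V^1,y\in V^2,\varphi^1(x)=\varphi^2(y)\}$ and edge set $\{((a,b),(x,y))\mid (a,x)\in E^1,(b,y)\in E^2\}$. An $n$-arc is a sequence of directed edges $e_0,\dots,e_{n-1}$ with the terminal vertex of $e_i$ equal to the initial vertex of $e_{i+1}$. A digraph is highly arc transitive if for every $n\in\mathbb{N}$ its automorphism group acts transitively on its (nonempty set of) $n$-arcs. *)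

(* Defs.v *)
From Stdlib Require Import ZArith List.
Import ListNotations.
Open Scope Z_scope.

Record digraph := Digraph { vtx : Type; edge : vtx -> vtx -> Prop }.

Definition Zline : digraph := Digraph Z (fun i j => j = i + 1).

Definition is_hom (G H : digraph) (f : vtx G -> vtx H) : Prop :=
  forall x y, edge G x y -> edge H (f x) (f y).
Definition is_epi (G H : digraph) (f : vtx G -> vtx H) : Prop :=
  is_hom G H f /\ (forall v, exists x, f x = v) /\
  (forall u v, edge H u v -> exists x y, edge G x y /\ f x = u /\ f y = v).

Definition layer_vtx (G1 G2 : digraph) (phi1 : vtx G1 -> Z) (phi2 : vtx G2 -> Z)
  : Type := { p : vtx G1 * vtx G2 | phi1 (fst p) = phi2 (snd p) }.

Definition layer_prod (G1 G2 : digraph) (phi1 : vtx G1 -> Z) (phi2 : vtx G2 -> Z)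
  : digraph :=
  Digraph (layer_vtx G1 G2 phi1 phi2)
    (fun u v => edge G1 (fst (proj1_sig u)) (fst (proj1_sig v)) /\
                edge G2 (snd (proj1_sig u)) (snd (proj1_sig v))).

Definition is_aut (G : digraph) (f : vtx G -> vtx G) : Prop :=
  (exists g : vtx G -> vtx G, (forall x, g (f x) = x) /\ (forall y, f (g y) = y)) /\
  (forall x y, edge G x y <-> edge G (f x) (f y)).

Fixpoint is_chain (G : digraph) (s : list (vtx G * vtx G)) : Prop :=
  match s with
  | [] => True
  | e :: s' => edge G (fst e) (snd e) /\
               match s' with [] => True | e' :: _ => snd e = fst e' end /\
               is_chain G s'
  end.

Definition is_arc (G : digraph) (n : nat) (s : list (vtx G * vtx G)) : Prop :=
  length s = n /\ is_chain G s.

Definition map_arc (G : digraph) (f : vtx G -> vtx G) (s : list (vtx G * vtx G)) :=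
  map (fun e => (f (fst e), f (snd e))) s.

Definition highly_arc_transitive (G : digraph) : Prop :=
  forall n : nat,
    (exists s, is_arc G n s) /\
    (forall s t, is_arc G n s -> is_arc G n t ->
       exists f, is_aut G f /\ map_arc G f s = t).

Inductive sgn := Mn | Zr | Pl.
Definition sgnZ (x : sgn) : Z := match x with Mn => -1 | Zr => 0 | Pl => 1 end.

Definition L_edge (u v : Z * sgn) : Prop :=
  let '(i, x) := u in let '(j, y) := v in
  j = i + 1 /\ (Z.Even i \/ (Z.Odd i /\ sgnZ x + sgnZ y <> 0)).

Definition L : digraph := Digraph (Z * sgn) L_edge.

Definition phi1 : vtx L -> Z := fun v => fst v.
Definition phi2 : vtx L -> Z := fun v => fst v + 1.

(* Main.v *)
Require Import Defs.
From Stdlib Require Import ZArith List Lia Bool Eqdep_dec.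
Import ListNotations.
Open Scope Z_scope.

Definition D := layer_prod L L phi1 phi2.
Definition R : Type := ((Z * sgn) * (Z * sgn))%type.
Definition valid (p : R) : Prop := fst (fst p) = fst (snd p) + 1.
Definition Eraw (p q : R) : Prop := L_edge (fst p) (fst q) /\ L_edge (snd p) (snd q).

Lemma vext (u v : vtx D) : proj1_sig u = proj1_sig v -> u = v.
Proof.
  destruct u as [p hp], v as [q hq]; simpl; intros ->; f_equal.
  apply UIP_dec, Z.eq_dec.
Qed.

Definition liftV (F : R -> R) (HF : forall p, valid p -> valid (F p)) : vtx D -> vtx D :=
  fun u => exist (fun p : R => phi1 (fst p) = phi2 (snd p)) (F (proj1_sig u)) (HF _ (proj2_sig u)).

Lemma lift_aut F HF G (HG : forall p, valid p -> valid (G p))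
  (FG : forall p, valid p -> G (F p) = p) (GF : forall p, valid p -> F (G p) = p)
  (HE : forall p q, valid p -> valid q -> (Eraw p q <-> Eraw (F p) (F q))) :
  is_aut D (liftV F HF).
Proof.
  split.
  - exists (liftV G HG); split; intros; apply vext; simpl.
    + apply FG; exact (proj2_sig x).
    + apply GF; exact (proj2_sig y).
  - intros x y. exact (HE _ _ (proj2_sig x) (proj2_sig y)).
Qed.

Lemma aut_comp f g : is_aut D f -> is_aut D g -> is_aut D (fun x => g (f x)).
Proof.
  intros [[f' [H1 H2]] Hf] [[g' [H3 H4]] Hg]; split.
  - exists (fun y => f' (g' y)); split; intros.
    + rewrite H3; apply H1.
    + rewrite H2; apply H4.
  - intros x y; rewrite (Hf x y); apply Hg.
Qed.

Lemma aut_id : is_aut D (fun x => x).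
Proof. split. exists (fun x => x); split; auto. intros; tauto. Qed.

Lemma L_edge_iff i x j y : L_edge (i,x) (j,y) <->
  j = i + 1 /\ (Z.even i = true \/ sgnZ x + sgnZ y <> 0).
Proof.
  unfold L_edge. rewrite <- Z.even_spec, <- Z.odd_spec, <- Z.negb_even.
  destruct (Z.even i); simpl; intuition discriminate.
Qed.

Definition sh (d : Z) (p : R) : R :=
  let '((i,x),(j,y)) := p in
  if Z.even d then ((i+d,x),(j+d,y)) else ((j+d+1,y),(i+d-1,x)).

Lemma sh_valid d : forall p, valid p -> valid (sh d p).
Proof.
  intros [[i x][j y]]; unfold valid, sh; simpl; intros H.
  destruct (Z.even d); simpl; lia.
Qed.

Lemma sh_inv d p : sh (-d) (sh d p) = p.
Proof.
  destruct p as [[i x][j y]]; unfold sh. rewrite Z.even_opp.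
  destruct (Z.even d) eqn:E; f_equal; f_equal; lia.
Qed.

Lemma L_edge_shift i j i' j' e x y : Z.even e = true -> i' = i + e -> j' = j + e ->
  (L_edge (i,x) (j,y) <-> L_edge (i',x) (j',y)).
Proof.
  intros He -> ->. rewrite !L_edge_iff, Z.even_add, He.
  destruct (Z.even i); simpl; split; intros [H1 H2]; split; auto; lia.
Qed.

Lemma sh_edge d p q : Eraw p q <-> Eraw (sh d p) (sh d q).
Proof.
  destruct p as [[i x][j y]], q as [[i' x'][j' y']]; unfold Eraw, sh; simpl.
  destruct (Z.even d) eqn:E.
  - rewrite (L_edge_shift i i' (i+d) (i'+d) d x x'), (L_edge_shift j j' (j+d) (j'+d) d y y');
      auto; tauto.
  - assert (E1 : Z.even (d+1) = true) by (rewrite Z.even_add, E; reflexivity).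
    assert (E2 : Z.even (d-1) = true) by (rewrite Z.even_sub, E; reflexivity).
    rewrite (L_edge_shift i i' (i+d-1) (i'+d-1) (d-1) x x'), (L_edge_shift j j' (j+d+1) (j'+d+1) (d+1) y y');
      auto; try lia; tauto.
Qed.

Definition shA d := liftV (sh d) (sh_valid d).

Lemma sh_aut d : is_aut D (shA d).
Proof.
  apply (lift_aut _ _ (sh (-d)) (sh_valid (-d))).
  - intros; apply sh_inv.
  - intros; rewrite <- (Z.opp_involutive d) at 1; apply sh_inv.
  - intros; apply sh_edge.
Qed.

Lemma sh_level d p : valid p -> fst (fst (sh d p)) = fst (fst p) + d.
Proof.
  destruct p as [[i x][j y]]; unfold valid, sh; simpl; intros H.
  destruct (Z.even d); simpl; lia.
Qed.

Definition seqb (x y : sgn) : bool :=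
  match x, y with Mn, Mn | Zr, Zr | Pl, Pl => true | _, _ => false end.
Definition swp (x y z : sgn) : sgn := if seqb z x then y else if seqb z y then x else z.
Definition ng (x : sgn) : sgn := match x with Mn => Pl | Zr => Zr | Pl => Mn end.
Definition okb (x y : sgn) : bool := negb (Z.eqb (sgnZ x + sgnZ y) 0).

Lemma ok_b x y : sgnZ x + sgnZ y <> 0 <-> okb x y = true.
Proof. destruct x, y; cbn; split; intros; try discriminate; try lia; reflexivity. Qed.

Lemma swp_inv x y z : swp x y (swp x y z) = z.
Proof. destruct x, y, z; reflexivity. Qed.
Lemma ng_ng x : ng (ng x) = x.
Proof. destruct x; reflexivity. Qed.
Lemma swp_pair_b x y u v : okb (swp x y u) (swp (ng x) (ng y) v) = okb u v.
Proof. destruct x, y, u, v; reflexivity. Qed.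
Lemma swp_pair x y u v : (sgnZ u + sgnZ v <> 0 <->
  sgnZ (swp x y u) + sgnZ (swp (ng x) (ng y) v) <> 0).
Proof. rewrite !ok_b, swp_pair_b; tauto. Qed.
Lemma swp_fix_b x x' c : okb x c = true -> okb x' c = true -> swp (ng x) (ng x') c = c.
Proof. destruct x, x', c; cbn; intros; try discriminate; reflexivity. Qed.
Lemma swp_at x y : swp x y x = y.
Proof. destruct x, y; reflexivity. Qed.

Definition pm (A B : Z -> sgn -> sgn) (p : R) : R :=
  let '((i,x),(j,y)) := p in ((i, A i x), (j, B j y)).

Lemma pm_valid A B : forall p, valid p -> valid (pm A B p).
Proof. intros [[i x][j y]]; unfold valid; simpl; auto. Qed.

Definition compat (A : Z -> sgn -> sgn) := forall i x x', Z.even i = false ->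
  (sgnZ x + sgnZ x' <> 0 <-> sgnZ (A i x) + sgnZ (A (i+1) x') <> 0).

Lemma compat_edge A i x j y : compat A ->
  (L_edge (i,x) (j,y) <-> L_edge (i, A i x) (j, A j y)).
Proof.
  intros HA; rewrite !L_edge_iff; split; intros [-> H]; split; auto;
  destruct (Z.even i) eqn:E; auto; right; destruct H as [H|H]; try discriminate;
  apply (HA i x y E); auto.
Qed.

Lemma pm_aut A B (HA : forall i x, A i (A i x) = x) (HB : forall i x, B i (B i x) = x)
  (cA : compat A) (cB : compat B) : is_aut D (liftV (pm A B) (pm_valid A B)).
Proof.
  apply (lift_aut _ _ (pm A B) (pm_valid A B)).
  - intros [[i x][j y]] _; simpl; rewrite HA, HB; reflexivity.
  - intros [[i x][j y]] _; simpl; rewrite HA, HB; reflexivity.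
  - intros [[i x][j y]] [[i' x'][j' y']] _ _; unfold Eraw, pm; cbn [fst snd].
    rewrite (compat_edge A i x i' x' cA), (compat_edge B j y j' y' cB); tauto.
Qed.

Definition partner (k : Z) : Z := if Z.even k then k - 1 else k + 1.
Definition T (k : Z) (x y : sgn) (i : Z) : sgn -> sgn :=
  if Z.eqb i k then swp x y else if Z.eqb i (partner k) then swp (ng x) (ng y) else fun z => z.

Lemma T_inv k x y i z : T k x y i (T k x y i z) = z.
Proof. unfold T; destruct (Z.eqb i k), (Z.eqb i (partner k)); auto using swp_inv. Qed.

Lemma even_wit i : Z.even i = true -> exists m, i = 2 * m.
Proof. intros H; apply Z.even_spec in H; destruct H as [m Hm]; exists m; lia. Qed.
Lemma odd_wit i : Z.even i = false -> exists m, i = 2 * m + 1.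
Proof.
  intros H; assert (Z.odd i = true) by (rewrite <- Z.negb_even, H; reflexivity).
  apply Z.odd_spec in H0; destruct H0 as [m Hm]; exists m; lia.
Qed.

Lemma T_compat k x y : compat (T k x y).
Proof.
  intros i u v Hi. destruct (odd_wit i Hi) as [m Hm]. unfold T, partner.
  destruct (Z.even k) eqn:Ek;
  [destruct (even_wit k Ek) as [n Hn] | destruct (odd_wit k Ek) as [n Hn]];
  destruct (Z.eqb_spec i k), (Z.eqb_spec (i+1) k);
  try (exfalso; lia).
  - destruct (Z.eqb_spec i (k-1)); [|exfalso; lia].
    rewrite <- (ng_ng x) at 2. rewrite <- (ng_ng y) at 2. apply swp_pair.
  - destruct (Z.eqb_spec i (k-1)); [exfalso; lia|].
    destruct (Z.eqb_spec (i+1) (k-1)); [exfalso; lia|]. tauto.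
  - destruct (Z.eqb_spec (i+1) (k+1)); [|exfalso; lia]. apply swp_pair.
  - destruct (Z.eqb_spec i (k+1)); [exfalso; lia|].
    destruct (Z.eqb_spec (i+1) (k+1)); [exfalso; lia|]. tauto.
Qed.

Lemma T_at k x y : T k x y k x = y.
Proof. unfold T; rewrite Z.eqb_refl; apply swp_at. Qed.

Lemma T_high k x y i z : i > k + 1 -> T k x y i z = z.
Proof.
  intros H; unfold T, partner; destruct (Z.eqb_spec i k); [lia|].
  destruct (Z.even k); [destruct (Z.eqb_spec i (k-1)) | destruct (Z.eqb_spec i (k+1))]; try lia; auto.
Qed.

Lemma T_fix m x x' c : L_edge (m,x) (m+1,c) -> L_edge (m,x') (m+1,c) -> T m x x' (m+1) c = c.
Proof.
  rewrite !L_edge_iff; intros [_ H1] [_ H2]. unfold T, partner.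
  destruct (Z.eqb_spec (m+1) m); [lia|].
  destruct (Z.even m) eqn:E.
  - destruct (Z.eqb_spec (m+1) (m-1)); [lia|]; auto.
  - rewrite Z.eqb_refl. destruct H1 as [H1|H1]; [discriminate|].
    destruct H2 as [H2|H2]; [discriminate|].
    apply ok_b in H1; apply ok_b in H2; apply swp_fix_b; auto.
Qed.

Definition lev (u : vtx D) : Z := fst (fst (proj1_sig u)).

Lemma VT (v w : vtx D) : exists f, is_aut D f /\ f v = w.
Proof.
  destruct w as [[[j x'][j1 y']] hw]. cbn in hw.
  pose (u := shA (j - lev v) v).
  assert (Hl : fst (fst (proj1_sig u)) = j).
  { unfold u, shA, liftV; cbn [proj1_sig]. rewrite sh_level; [|exact (proj2_sig v)].
    unfold lev. rewrite Z.add_comm, Z.sub_add; reflexivity. }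
  assert (Hv : valid (proj1_sig u)) by exact (proj2_sig u).
  destruct (proj1_sig u) as [[j0 a][j2 b]] eqn:Eu.
  exists (fun z => liftV (pm (T j0 a x') (T j2 b y')) (pm_valid _ _) (shA (j - lev v) z)).
  split.
  - apply aut_comp; [apply sh_aut|]. apply pm_aut; auto using T_inv, T_compat.
  - apply vext. change (shA (j - lev v) v) with u.
    unfold liftV at 1; cbn [proj1_sig]. rewrite Eu. cbn [pm].
    rewrite !T_at. unfold valid in Hv; cbn in Hv, Hl. unfold phi2 in hw; cbn in hw. assert (j2 = j1) by lia. subst; reflexivity.
Qed.

Lemma edge_lev u v : edge D u v -> lev v = lev u + 1.
Proof.
  destruct u as [[[i x][j y]] hu], v as [[[i' x'][j' y']] hv]; cbn.
  intros [H _]. apply L_edge_iff in H; unfold lev; cbn; lia.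
Qed.

Lemma S_lemma (u u' w : vtx D) : edge D u w -> edge D u' w ->
  exists g, is_aut D g /\ g u = u' /\ g w = w /\ (forall z, lev z > lev w -> g z = z).
Proof.
  destruct u as [[[i a][j b]] hu], u' as [[[i' a'][j' b']] hu'], w as [[[k c][l d]] hw].
  unfold phi1, phi2 in hu, hu', hw; cbn in hu, hu', hw. cbn [edge D layer_prod proj1_sig fst snd].
  intros [E1 E2] [E3 E4].
  assert (k = i + 1 /\ l = j + 1 /\ k = i' + 1 /\ l = j' + 1) as (H1 & H2 & H3 & H4).
  { apply L_edge_iff in E1, E2, E3, E4; lia. }
  assert (i' = i) by lia; assert (j' = j) by lia; assert (k = i + 1) by lia;
  assert (l = j + 1) by lia; clear H1 H2 H3 H4.
  rewrite H in E3; rewrite H0 in E4; rewrite H5 in E1, E3; rewrite H6 in E2, E4.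
  exists (liftV (pm (T i a a') (T j b b')) (pm_valid _ _)).
  split; [apply pm_aut; auto using T_inv, T_compat|].
  split; [|split].
  - apply vext; cbn. rewrite !T_at, H, H0; reflexivity.
  - apply vext; cbn. rewrite H5, H6, !T_fix; auto.
  - intros [[[k2 e][l2 f]] hz] Hz. cbn in hz. unfold lev in Hz; cbn in Hz.
    apply vext; cbn. unfold phi2 in hz; cbn in hz. rewrite !T_high; auto; lia.
Qed.

Lemma aut_edge f u v : is_aut D f -> edge D u v -> edge D (f u) (f v).
Proof. intros [_ H] E; apply (proj1 (H u v)); exact E. Qed.

Lemma chain_levels : forall (t : list (vtx D * vtx D)) w, is_chain D t ->
  (match t with [] => True | e :: _ => fst e = w end) ->
  forall e, In e t -> (fst e = w \/ lev (fst e) > lev w) /\ lev (snd e) > lev w.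
Proof.
  induction t as [|e0 t IH]; intros w Hc Hh e Hin; [destruct Hin|].
  destruct Hc as [He [Hn Hc]]. change (fst e0 = w) in Hh. subst w.
  pose proof (edge_lev _ _ He) as Hl.
  destruct Hin as [Hin|Hin].
  { subst e; split; [left; reflexivity|]. lia. }
  destruct (IH (snd e0) Hc) with (e := e) as [[A|A] B]; auto.
  - destruct t; auto.
  - split; [right; rewrite A|]; lia.
  - split; [right|]; lia.
Qed.

Lemma map_arc_fix g t : (forall e, In e t -> g (fst e) = fst e /\ g (snd e) = snd e) ->
  map_arc D g t = t.
Proof.
  induction t as [|e t IH]; intros H; simpl; auto.
  destruct (H e (or_introl eq_refl)) as [H1 H2].
  f_equal; [|apply IH; intros; apply H; right; auto].
  destruct e as [a b]; cbn in H1, H2 |- *; f_equal; assumption.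
Qed.

Lemma map_arc_comp f g s : map_arc D (fun x => g (f x)) s = map_arc D g (map_arc D f s).
Proof. induction s; simpl; f_equal; auto. Qed.

Lemma map_arc_cons f (e : vtx D * vtx D) s :
  map_arc D f (e :: s) = (f (fst e), f (snd e)) :: map_arc D f s.
Proof. reflexivity. Qed.
Lemma map_arc_nil f : map_arc D f [] = [].
Proof. reflexivity. Qed.

Lemma main_trans : forall s t : list (vtx D * vtx D), is_chain D s -> is_chain D t ->
  length s = length t -> exists f, is_aut D f /\ map_arc D f s = t.
Proof.
  induction s as [|e s IH]; intros t Hs Ht Hl.
  - destruct t; [|discriminate]. exists (fun x => x); split; [apply aut_id|reflexivity].
  - destruct t as [|e' t]; [discriminate|].
    destruct Hs as [He [Hc Hs]], Ht as [He' [Hc' Ht]].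
    destruct s as [|e2 s].
    + destruct t; [|discriminate].
      destruct (VT (snd e) (snd e')) as [f1 [Hf1 Hfv]].
      pose proof (aut_edge _ _ _ Hf1 He) as E1. rewrite Hfv in E1.
      destruct (S_lemma _ _ _ E1 He') as [g [Hg [Hgu [Hgw _]]]].
      exists (fun x => g (f1 x)); split; [apply aut_comp; auto|].
      rewrite map_arc_cons, map_arc_nil, Hfv, Hgu, Hgw. destruct e'; reflexivity.
    + destruct t as [|e2' t]; [discriminate|].
      destruct (IH (e2' :: t) Hs Ht) as [f [Hf Hm]]; [simpl in *; lia|].
      rewrite map_arc_cons in Hm. injection Hm as Hm1 Hm2.
      change ((f (fst e2), f (snd e2)) = e2') in Hm1.
      pose proof (aut_edge _ _ _ Hf He) as E1.
      assert (Hfs : f (snd e) = snd e') by (rewrite Hc, Hc', <- Hm1; reflexivity).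
      rewrite Hfs in E1.
      destruct (S_lemma _ _ _ E1 He') as [g [Hg [Hgu [Hgw Hgz]]]].
      exists (fun x => g (f x)); split; [apply aut_comp; auto|].
      rewrite map_arc_comp, (map_arc_cons f e), (map_arc_cons f e2), Hm1, Hm2, Hfs.
      rewrite map_arc_cons. cbn [fst snd]. rewrite Hgu, Hgw.
      assert (Hfix : map_arc D g (e2' :: t) = e2' :: t).
      { apply map_arc_fix. intros x Hx.
        destruct (chain_levels (e2' :: t) (snd e') Ht (eq_sym Hc') x Hx) as [[A|A] B].
        - split; [rewrite A; auto|apply Hgz; auto].
        - split; apply Hgz; auto. }
      rewrite Hfix. destruct e'; reflexivity.
Qed.

Lemma vt_ok (i : Z) : phi1 (i, Pl) = phi2 (i - 1, Pl).
Proof. unfold phi1, phi2; simpl; ring. Qed.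
Definition vt (i : Z) : vtx D :=
  exist (fun p : vtx L * vtx L => phi1 (fst p) = phi2 (snd p)) ((i, Pl), (i - 1, Pl)) (vt_ok i).

Fixpoint arcfrom (i : Z) (n : nat) : list (vtx D * vtx D) :=
  match n with O => [] | S n' => (vt i, vt (i + 1)) :: arcfrom (i + 1) n' end.

Lemma arcfrom_ok n : forall i, is_arc D n (arcfrom i n).
Proof.
  induction n as [|n IH]; intros i; split; simpl; auto.
  - f_equal; apply (proj1 (IH (i+1))).
  - split; [|split].
    + change (L_edge (i,Pl) (i+1,Pl) /\ L_edge (i-1,Pl) (i+1-1,Pl)).
      split; apply L_edge_iff; split; try lia; right; cbn; lia.
    + destruct n; simpl; reflexivity.
    + apply (proj2 (IH (i+1))).
Qed.

Theorem mainTheorem2 :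
  is_epi L Zline phi1 /\ is_epi L Zline phi2 /\
  highly_arc_transitive (layer_prod L L phi1 phi2).
Proof.
  split; [|split].
  - split; [|split].
    + intros [i x] [j y] H; apply L_edge_iff in H; cbn; unfold phi1; cbn; lia.
    + intros v; exists (v, Zr); reflexivity.
    + intros u v H; cbn in H. exists (u, Pl), (v, Pl); split; [|split; auto].
      apply L_edge_iff; split; [lia|right; cbn; lia].
  - split; [|split].
    + intros [i x] [j y] H; apply L_edge_iff in H; cbn; unfold phi2; cbn; lia.
    + intros v; exists (v - 1, Zr); unfold phi2; cbn; ring.
    + intros u v H; cbn in H. exists (u - 1, Pl), (v - 1, Pl); split; [|unfold phi2; cbn; split; lia].
      apply L_edge_iff; split; [lia|right; cbn; lia].
  - intros n; split.
    + exists (arcfrom 0 n); apply arcfrom_ok.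
    + intros s t [H1 H2] [H3 H4]. apply main_trans; auto. transitivity n; [exact H1|symmetry; exact H3].
Qed.
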